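(* Let $T=(K_n,K_p,R_s,R_d,C,\mathsf{n})$ be an argumentation theory, let $G(T)$ be its full grounding, and let $G_{DL}(T)$ be the grounding of $T$ obtained via the Datalog program $P_T$ (Transformation 1), both as defined in the context. Then $$\mathrm{Args}(G(T))=\mathrm{Args}(G_{DL}(T))\quad\text{and}\quad \mathrm{Att}(G(T))=\mathrm{Att}(G_{DL}(T)),$$ i.e. the two ground theories induce the same abstract argumentation framework.
   Context: Work over a function-free first-order signature (predicates and constants); atoms are $p(t_1,\dots,t_k)$ with each $t_i$ a constant or variable. An argumentation theory is $T=(K_n,K_p,R_s,R_d,C,\mathsf{n})$ where: $K_n$ (axioms) and $K_p$ (ordinary premises) are finite sets of ground atoms; $R_s$ (strict rules) is a finite set of rules $b_1(\vec X_1),\dots,b_m(\vec X_m)\to h(\vec Y)$ and $R_d$ (defeasible rules) a finite set of rules $b_1(\vec X_1),\dots,b_m(\vec X_m)\Rightarrow h(\vec Y)$, where every variable of the head occurs in the body; each $r\in R_d$ carries a name atom $\mathsf{n}(r)=\nu_r(\vec Z)$ whose variables occur in the body of $r$; $C$ is a finite set of contrariness rules $c: s(\vec X)\rightsquigarrow S(\vec X)$, where $s(\vec X)$ is an atom and $S(\vec X)$ a finite set of atoms whose variables occur in $\vec X$. The Herbrand universe $HU(T)$ is the set of constants occurring in $T$; a ground substitution maps variables to $HU(T)$, and for a rule or contrariness rule $x$ and ground substitution $\sigma$, $x\sigma$ is its ground instance (with $\mathsf{n}(r\sigma)=\mathsf{n}(r)\sigma$). The full grounding $G(T)$ has the same $K_n,K_p$,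 and as rules and contrariness rules all ground instances $x\sigma$ of those of $T$. For a ground theory $G$ with premises $K_n\cup K_p$, rules $R$ and contrariness rules $C'$: arguments are defined inductively: each $k\in K_n\cup K_p$ is an argument with conclusion $\mathrm{conc}=k$, premises $\mathrm{Prem}=\{k\}$, no rules; if $A_1,\dots,A_m$ are arguments and $r\in R$ is a ground rule with body $\mathrm{conc}(A_1),\dots,\mathrm{conc}(A_m)$ and head $h$, then $A=\langle A_1,\dots,A_m\to h\rangle$ is an argument with $\mathrm{conc}(A)=h$, top rule $\mathrm{top}(A)=r$, $\mathrm{Prem}(A)=\bigcup_i\mathrm{Prem}(A_i)$, $\mathrm{Rules}(A)=\{r\}\cup\bigcup_i\mathrm{Rules}(A_i)$, and subarguments $\mathrm{Sub}(A)=\{A\}\cup\bigcup_i\mathrm{Sub}(A_i)$. The weak points of $A$ are $\mathrm{wp}(A)=(\mathrm{Prem}(A)\cap K_p)\cup\bigcup_{r\in\mathrm{Rules}(A)\cap R_d}\{\mathrm{head}(r),\mathsf{n}(r)\}$. Argument $A$ attacks $A'$ iff there is a ground contrariness rule $s\rightsquigarrow S$ in $C'$ with $s\in\mathrm{wp}(A')$ and $\mathrm{conc}(A)\in S$. $\mathrm{Args}(G)$ and $\mathrm{Att}(G)$ denote the set of arguments and the attack relation. Transformation 1: the Datalog program $P_T$ contains the fact $k.$ for every $k\in K_n\cup K_p$, and for every rule $r\in R_s\cup R_d$ with body $b_1(\vec X_1),\dots,b_m(\vec X_m)$, head $h(\vec Y)$ and variable list $\vec X$ (all variables of $r$), with a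 fresh predicate $\mathrm{aux}_r$: the rules $\mathrm{aux}_r(\vec X)\leftarrow b_1(\vec X_1),\dots,b_m(\vec X_m)$ and $h(\vec Y)\leftarrow \mathrm{aux}_r(\vec X)$, and, if $r\in R_d$ with $\mathsf{n}(r)=\nu_r(\vec Z)$, additionally $\nu_r(\vec Z)\leftarrow\mathrm{aux}_r(\vec X)$. Let $M$ be the least Herbrand model of $P_T$. The grounding via Datalog $G_{DL}(T)$ has premises $K_n,K_p$, rules $\{r\sigma : r\in R_s\cup R_d,\ \mathrm{aux}_r(\vec X)\sigma\in M\}$ (strict/defeasible as $r$), and contrariness rules $\{c\sigma: c=(s(\vec X)\rightsquigarrow S(\vec X))\in C,\ s(\vec X)\sigma\in M\}$. *)

(* Defs.v *)
(* Function-free first-order signature: constants, predicate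
   symbols and variables are all represented by natural numbers. *)
From Stdlib Require Import List Arith.
Import ListNotations.

Inductive term := TC (c : nat) | TV (v : nat).
Record atom := mkAtom { apred : nat; aargs : list term }.
Record gatom := mkGAtom { gpred : nat; gargs : list nat }.

Record rule := mkRule { rbody : list atom; rhead : atom }.
Record drule := mkDRule { drl : rule; dname : atom }.
(* contrariness rule  s(X) ~> S(X) *)
Record crule := mkCRule { cs : atom; cS : list atom }.

Record theory := mkTheory {
  Kn : list gatom; Kp : list gatom;
  Rs : list rule; Rd : list drule; Cr : list crule }.

Definition term_vars (t : term) : list nat :=
  match t with TV v => [v] | TC _ => [] end.
Definition term_consts (t : term) : list nat :=
  match t with TC c => [c] | TV _ => [] end.
Definition atom_vars (a : atom) : list nat := flat_map term_vars (aargs a).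
Definition atom_consts (a : atom) : list nat := flat_map term_consts (aargs a).

Definition allrules (T : theory) : list (rule * option atom) :=
  map (fun r => (r, None)) (Rs T) ++ map (fun d => (drl d, Some (dname d))) (Rd T).

Definition name_atoms (nm : option atom) : list atom :=
  match nm with Some a => [a] | None => [] end.

(* the variable list X of a rule: all its variables, without repetition *)
Definition rn_vars (rn : rule * option atom) : list nat :=
  nodup Nat.eq_dec (flat_map atom_vars (rbody (fst rn)) ++ atom_vars (rhead (fst rn))
                    ++ flat_map atom_vars (name_atoms (snd rn))).
Definition crule_vars (c : crule) : list nat :=
  nodup Nat.eq_dec (atom_vars (cs c) ++ flat_map atom_vars (cS c)).

Definition HU (T : theory) : list nat :=
  flat_map gargs (Kn T ++ Kp T)
  ++ flat_map (fun rn => flat_map atom_consts (rhead (fst rn) :: rbody (fst rn) ++ name_atoms (snd rn)))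
              (allrules T)
  ++ flat_map (fun c => flat_map atom_consts (cs c :: cS c)) (Cr T).

Definition wf_theory (T : theory) : Prop :=
  (forall rn, In rn (allrules T) ->
     (forall v, In v (atom_vars (rhead (fst rn))) -> In v (flat_map atom_vars (rbody (fst rn)))) /\
     (forall a v, snd rn = Some a -> In v (atom_vars a) -> In v (flat_map atom_vars (rbody (fst rn))))) /\
  (forall c, In c (Cr T) ->
     forall v, In v (flat_map atom_vars (cS c)) -> In v (atom_vars (cs c))).

Definition ground_sub_on (U vs : list nat) (sigma : nat -> nat) : Prop :=
  forall v, In v vs -> In (sigma v) U.

Definition gterm (sigma : nat -> nat) (t : term) : nat :=
  match t with TC c => c | TV v => sigma v end.
Definition gatom_of (sigma : nat -> nat) (a : atom) : gatom :=
  mkGAtom (apred a) (map (gterm sigma) (aargs a)).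

(* ground rule; gname = None for strict, Some n(r) for defeasible rules *)
Record grule := mkGRule { gbody : list gatom; ghead : gatom; gname : option gatom }.
Record gcrule := mkGCRule { gcs : gatom; gcS : list gatom }.

Definition ground_rn (sigma : nat -> nat) (rn : rule * option atom) : grule :=
  mkGRule (map (gatom_of sigma) (rbody (fst rn))) (gatom_of sigma (rhead (fst rn)))
          (option_map (gatom_of sigma) (snd rn)).
Definition ground_crule (sigma : nat -> nat) (c : crule) : gcrule :=
  mkGCRule (gatom_of sigma (cs c)) (map (gatom_of sigma) (cS c)).

Record gtheory := mkGTheory {
  gKn : list gatom; gKp : list gatom;
  gRules : grule -> Prop; gCon : gcrule -> Prop }.

Inductive arg := APrem (k : gatom) | ARule (r : grule) (subs : list arg).

Definition conc (A : arg) : gatom :=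
  match A with APrem k => k | ARule r _ => ghead r end.

Inductive isArg (G : gtheory) : arg -> Prop :=
| isArg_prem k : In k (gKn G ++ gKp G) -> isArg G (APrem k)
| isArg_rule r subs : gRules G r -> (forall B, In B subs -> isArg G B) ->
    map conc subs = gbody r -> isArg G (ARule r subs).

Inductive inPrem (k : gatom) : arg -> Prop :=
| inPrem_here : inPrem k (APrem k)
| inPrem_sub r subs B : In B subs -> inPrem k B -> inPrem k (ARule r subs).

Inductive inRules (r : grule) : arg -> Prop :=
| inRules_top subs : inRules r (ARule r subs)
| inRules_sub r' subs B : In B subs -> inRules r B -> inRules r (ARule r' subs).

Definition wp (G : gtheory) (A : arg) (x : gatom) : Prop :=
  (inPrem x A /\ In x (gKp G)) \/
  (exists r n, inRules r A /\ gRules G r /\ gname r = Some n /\ (x = ghead r \/ x = n)).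

Definition attacks (G : gtheory) (A A' : arg) : Prop :=
  exists c, gCon G c /\ wp G A' (gcs c) /\ In (conc A) (gcS c).

Definition Att (G : gtheory) (A A' : arg) : Prop :=
  isArg G A /\ isArg G A' /\ attacks G A A'.

Definition full_grounding (T : theory) : gtheory :=
  mkGTheory (Kn T) (Kp T)
    (fun g => exists rn sigma, In rn (allrules T) /\
       ground_sub_on (HU T) (rn_vars rn) sigma /\ g = ground_rn sigma rn)
    (fun g => exists c sigma, In c (Cr T) /\
       ground_sub_on (HU T) (crule_vars c) sigma /\ g = ground_crule sigma c).

Inductive dpred := DOrig (p : nat) | DAux (i : nat).
Record datom := mkDAtom { dpr : dpred; dargs : list term }.
Record clause := mkClause { chead : datom; cbody : list datom }.
Record gdatom := mkGDAtom { gdpr : dpred; gdargs : list nat }.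

Definition gdatom_of (sigma : nat -> nat) (a : datom) : gdatom :=
  mkGDAtom (dpr a) (map (gterm sigma) (dargs a)).
Definition datom_vars (a : datom) : list nat := flat_map term_vars (dargs a).
Definition datom_consts (a : datom) : list nat := flat_map term_consts (dargs a).
Definition clause_vars (cl : clause) : list nat := flat_map datom_vars (chead cl :: cbody cl).
Definition prog_consts (P : list clause) : list nat :=
  flat_map (fun cl => flat_map datom_consts (chead cl :: cbody cl)) P.

(* least Herbrand model of a Datalog program (least fixpoint of T_P) *)
Inductive lhm (P : list clause) : gdatom -> Prop :=
| lhm_rule cl sigma : In cl P -> ground_sub_on (prog_consts P) (clause_vars cl) sigma ->
    (forall b, In b (cbody cl) -> lhm P (gdatom_of sigma b)) ->
    lhm P (gdatom_of sigma (chead cl)).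

Definition lift_atom (a : atom) : datom := mkDAtom (DOrig (apred a)) (aargs a).
Definition lift_gatom (k : gatom) : datom := mkDAtom (DOrig (gpred k)) (map TC (gargs k)).
(* aux_r(X) for the rule with index i in allrules T (fresh predicate DAux i) *)
Definition aux_atom (i : nat) (rn : rule * option atom) : datom :=
  mkDAtom (DAux i) (map TV (rn_vars rn)).

Definition rule_clauses (i : nat) (rn : rule * option atom) : list clause :=
  mkClause (aux_atom i rn) (map lift_atom (rbody (fst rn)))
  :: mkClause (lift_atom (rhead (fst rn))) [aux_atom i rn]
  :: map (fun nm => mkClause (lift_atom nm) [aux_atom i rn]) (name_atoms (snd rn)).

Definition PT (T : theory) : list clause :=
  map (fun k => mkClause (lift_gatom k) []) (Kn T ++ Kp T)
  ++ flat_map (fun p => rule_clauses (fst p) (snd p))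
              (combine (seq 0 (length (allrules T))) (allrules T)).

Definition dl_grounding (T : theory) : gtheory :=
  mkGTheory (Kn T) (Kp T)
    (fun g => exists i rn sigma, nth_error (allrules T) i = Some rn /\
       ground_sub_on (HU T) (rn_vars rn) sigma /\
       lhm (PT T) (gdatom_of sigma (aux_atom i rn)) /\ g = ground_rn sigma rn)
    (fun g => exists c sigma, In c (Cr T) /\
       ground_sub_on (HU T) (crule_vars c) sigma /\
       lhm (PT T) (gdatom_of sigma (lift_atom (cs c))) /\ g = ground_crule sigma c).

(* Main.v *)
Require Import Defs.
From Stdlib Require Import List Arith Lia.
Import ListNotations.

Definition liftg (k : gatom) : gdatom := mkGDAtom (DOrig (gpred k)) (gargs k).

Lemma lhm_intro P cl sigma g : In cl P -> ground_sub_on (prog_consts P) (clause_vars cl) sigma ->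
  (forall b, In b (cbody cl) -> lhm P (gdatom_of sigma b)) ->
  g = gdatom_of sigma (chead cl) -> lhm P g.
Proof. intros; subst; econstructor; eauto. Qed.

Lemma lhm_args P g : lhm P g -> forall x, In x (gdargs g) -> In x (prog_consts P).
Proof.
  induction 1 as [cl sigma Hcl Hs _ _]. simpl. intros x Hx.
  apply in_map_iff in Hx as [t [<- Ht]].
  destruct t as [c|v]; simpl.
  - unfold prog_consts. apply in_flat_map. exists cl. split; auto.
    simpl. apply in_or_app. left. unfold datom_consts. apply in_flat_map.
    exists (TC c). simpl; auto.
  - apply Hs. unfold clause_vars. simpl. apply in_or_app. left.
    unfold datom_vars. apply in_flat_map. exists (TV v). simpl; auto.
Qed.

Lemma nth_combine {A} (l : list A) : forall k i x, nth_error l i = Some x ->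
  In (k + i, x) (combine (seq k (length l)) l).
Proof.
  induction l as [|a l IH]; intros k i x H.
  - destruct i; discriminate.
  - destruct i as [|i]; simpl in *.
    + inversion H; subst. left. f_equal. lia.
    + right. replace (k + S i) with (S k + i) by lia. auto.
Qed.

Lemma clause_in_PT T i rn cl : nth_error (allrules T) i = Some rn ->
  In cl (rule_clauses i rn) -> In cl (PT T).
Proof.
  intros Hn Hc. unfold PT. apply in_or_app. right. apply in_flat_map.
  exists (i, rn). split; auto. apply (nth_combine _ 0). auto.
Qed.

Lemma fact_lhm T k : In k (Kn T ++ Kp T) -> lhm (PT T) (liftg k).
Proof.
  intros H. apply (lhm_intro _ (mkClause (lift_gatom k) []) (fun v => v)).
  - unfold PT. apply in_or_app. left. apply in_map_iff. eauto.
  - intros v Hv. unfold clause_vars in Hv. simpl in Hv. rewrite app_nil_r in Hv.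
    unfold datom_vars in Hv. simpl in Hv. apply in_flat_map in Hv as [t [Ht Hv]].
    apply in_map_iff in Ht as [c [<- _]]. simpl in Hv. contradiction.
  - simpl. tauto.
  - unfold liftg, gdatom_of. simpl. f_equal. rewrite map_map. simpl.
    symmetry. apply map_id.
Qed.

Lemma rn_vars_head rn v : In v (atom_vars (rhead (fst rn))) -> In v (rn_vars rn).
Proof. intros. unfold rn_vars. apply nodup_In. apply in_or_app. right. apply in_or_app. auto. Qed.
Lemma rn_vars_name rn a v : snd rn = Some a -> In v (atom_vars a) -> In v (rn_vars rn).
Proof. intros E H. unfold rn_vars. apply nodup_In. rewrite E. simpl.
  apply in_or_app. right. apply in_or_app. right. rewrite app_nil_r. auto. Qed.
Lemma rn_vars_body rn v : In v (flat_map atom_vars (rbody (fst rn))) -> In v (rn_vars rn).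
Proof. intros. unfold rn_vars. apply nodup_In. apply in_or_app. auto. Qed.

Lemma aux_vars i rn v : In v (datom_vars (aux_atom i rn)) -> In v (rn_vars rn).
Proof. unfold datom_vars, aux_atom. simpl. intros H. apply in_flat_map in H as [t [Ht Hv]].
  apply in_map_iff in Ht as [w [<- Hw]]. simpl in Hv. destruct Hv as [<-|[]]. auto. Qed.

Lemma dl_rule_lhm T r : gRules (dl_grounding T) r ->
  lhm (PT T) (liftg (ghead r)) /\ (forall n, gname r = Some n -> lhm (PT T) (liftg n)).
Proof.
  intros [i [rn [sigma [Hn [_ [Hl ->]]]]]].
  assert (Hs : forall v, In v (rn_vars rn) -> In (sigma v) (prog_consts (PT T))).
  { intros v Hv. apply (lhm_args _ _ Hl). simpl. rewrite map_map.
    apply in_map_iff. exists v. auto. }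
  split.
  - apply (lhm_intro _ (mkClause (lift_atom (rhead (fst rn))) [aux_atom i rn]) sigma).
    + apply (clause_in_PT T i rn); auto. simpl; auto.
    + intros v Hv. unfold clause_vars in Hv. simpl in Hv.
      apply in_app_or in Hv as [Hv|Hv].
      * apply Hs, rn_vars_head. exact Hv.
      * rewrite app_nil_r in Hv. apply Hs. eapply aux_vars; eauto.
    + simpl. intros b [<-|[]]. exact Hl.
    + reflexivity.
  - intros n Hnm. simpl in Hnm. destruct (snd rn) as [a|] eqn:E; [|discriminate].
    simpl in Hnm. inversion Hnm; subst.
    apply (lhm_intro _ (mkClause (lift_atom a) [aux_atom i rn]) sigma).
    + apply (clause_in_PT T i rn); auto. unfold rule_clauses. rewrite E. simpl; auto.
    + intros v Hv. unfold clause_vars in Hv. simpl in Hv.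
      apply in_app_or in Hv as [Hv|Hv].
      * apply Hs. eapply rn_vars_name; eauto.
      * rewrite app_nil_r in Hv. apply Hs. eapply aux_vars; eauto.
    + simpl. intros b [<-|[]]. exact Hl.
    + reflexivity.
Qed.

Lemma full_to_dl T (HT : wf_theory T) A : isArg (full_grounding T) A ->
  isArg (dl_grounding T) A /\ lhm (PT T) (liftg (conc A)).
Proof.
  induction 1 as [k Hk | r subs Hr _ IH Hmap].
  - split. constructor. exact Hk. apply fact_lhm. exact Hk.
  - destruct Hr as [rn [sigma [Hin [Hg ->]]]].
    assert (C1 : forall b, In b (rbody (fst rn)) -> lhm (PT T) (liftg (gatom_of sigma b))).
    { intros b Hb. assert (In (gatom_of sigma b) (map conc subs)).
      { rewrite Hmap. simpl. apply in_map. auto. }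
      apply in_map_iff in H as [B [HB HBin]]. rewrite <- HB. apply IH. auto. }
    assert (C2 : forall v, In v (flat_map atom_vars (rbody (fst rn))) ->
                 In (sigma v) (prog_consts (PT T))).
    { intros v Hv. apply in_flat_map in Hv as [b [Hb Hv]].
      apply (lhm_args _ _ (C1 b Hb)). simpl. unfold atom_vars in Hv.
      apply in_flat_map in Hv as [t [Ht Hv]]. destruct t; simpl in Hv; [contradiction|].
      destruct Hv as [Ev|[]]; subst. match goal with |- In (sigma ?w) _ => change (sigma w) with (gterm sigma (TV w)) end. apply in_map. auto. }
    destruct HT as [HR _]. destruct (HR rn Hin) as [Hh Hnm].
    assert (C3 : forall v, In v (rn_vars rn) -> In (sigma v) (prog_consts (PT T))).
    { intros v Hv. apply C2. unfold rn_vars in Hv. apply nodup_In in Hv.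
      apply in_app_or in Hv as [Hv|Hv]; auto.
      apply in_app_or in Hv as [Hv|Hv]; auto.
      destruct (snd rn) as [a|] eqn:E; simpl in Hv; [|contradiction].
      rewrite app_nil_r in Hv. eapply Hnm; eauto. }
    destruct (In_nth_error _ _ Hin) as [i Hi].
    assert (Haux : lhm (PT T) (gdatom_of sigma (aux_atom i rn))).
    { apply (lhm_intro _ (mkClause (aux_atom i rn) (map lift_atom (rbody (fst rn)))) sigma).
      - apply (clause_in_PT T i rn); auto. simpl; auto.
      - intros v Hv. unfold clause_vars in Hv. simpl in Hv.
        apply in_app_or in Hv as [Hv|Hv].
        + apply C3. eapply aux_vars; eauto.
        + apply C2. apply in_flat_map in Hv as [d [Hd Hv]].
          apply in_map_iff in Hd as [b [<- Hb]]. apply in_flat_map. exists b. auto.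
      - simpl. intros d Hd. apply in_map_iff in Hd as [b [<- Hb]]. apply C1. auto.
      - reflexivity. }
    assert (Hr : gRules (dl_grounding T) (ground_rn sigma rn)).
    { exists i, rn, sigma. auto. }
    split.
    + constructor; auto. intros B0 HB0. apply IH; auto.
    + exact (proj1 (dl_rule_lhm T _ Hr)).
Qed.

Lemma dl_full_rules T r : gRules (dl_grounding T) r -> gRules (full_grounding T) r.
Proof. intros [i [rn [sigma [Hn [Hg [_ ->]]]]]]. exists rn, sigma.
  split; auto. eapply nth_error_In; eauto. Qed.

Lemma dl_to_full T A : isArg (dl_grounding T) A -> isArg (full_grounding T) A.
Proof.
  induction 1 as [k Hk | r subs Hr _ IH Hmap].
  - constructor. exact Hk.
  - constructor; auto. apply dl_full_rules; auto.
Qed.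

Lemma rules_of_arg G A r : isArg G A -> inRules r A -> gRules G r.
Proof.
  intros HA HI. revert HA. induction HI as [subs | r' subs B HB HI IH]; intros HA.
  - inversion HA; auto.
  - inversion HA; subst. apply IH. auto.
Qed.

Theorem lemma1 (T : theory) (HT : wf_theory T) :
  (forall A : arg, isArg (full_grounding T) A <-> isArg (dl_grounding T) A) /\
  (forall A B : arg, Att (full_grounding T) A B <-> Att (dl_grounding T) A B).
Proof.
  assert (E : forall A, isArg (full_grounding T) A <-> isArg (dl_grounding T) A).
  { intros A; split. intros H; apply (full_to_dl T HT A H). apply dl_to_full. }
  split; [exact E|]. intros A B. split.
  - intros [HA [HB [c [Hc [Hw Hin]]]]].
    apply E in HA. apply E in HB. split; [auto|split; [auto|]].
    destruct Hc as [c0 [sigma [Hc0 [Hs ->]]]].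
    assert (W : wp (dl_grounding T) B (gatom_of sigma (cs c0)) /\
                lhm (PT T) (liftg (gatom_of sigma (cs c0)))).
    { destruct Hw as [[Hp Hk]|[r [n [Hr [_ [Hnm Hx]]]]]].
      - split. left; auto. apply fact_lhm. simpl in *. apply in_or_app; auto.
      - assert (Hrd : gRules (dl_grounding T) r) by (eapply rules_of_arg; eauto).
        split. right. exists r, n. auto.
        destruct (dl_rule_lhm T r Hrd) as [H1 H2].
        simpl in Hx. destruct Hx as [Hx|Hx]; rewrite Hx; auto. }
    destruct W as [W1 W2].
    exists (ground_crule sigma c0). split; [|split; auto].
    exists c0, sigma. auto.
  - intros [HA [HB [c [Hc [Hw Hin]]]]].
    apply E in HA. apply E in HB. split; [auto|split; [auto|]].
    exists c. split.
    + destruct Hc as [c0 [sigma [H1 [H2 [_ H3]]]]]. exists c0, sigma. auto.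
    + split; auto. destruct Hw as [H|[r [n [H1 [H2 H3]]]]].
      * left; auto.
      * right. exists r, n. split; auto. split; auto. apply dl_full_rules; auto.
Qed.
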